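(* For every infinite compact Hausdorff space $K$ there exists a point $p\in K$ such that $C(K,p)=\{f\in C(K):f(p)=0\}$ fails the ball fixed point property.
   Context: $C(K)$ is the real Banach space of continuous functions on $K$ with the sup norm, and $C(K,p)$ carries the restricted norm. A real Banach space $X$ has the ball fixed point property (BFPP) if every nonexpansive map $T\colon B_X\to B_X$ (i.e. $\|Tx-Ty\|\le\|x-y\|$) has a fixed point, where $B_X$ is the closed unit ball. *)

(* Defs.v *)
From HB Require Import structures.
From mathcomp Require Import all_boot all_order all_algebra.
From mathcomp Require Import all_classical all_reals all_analysis.
Set Implicit Arguments. Unset Strict Implicit. Unset Printing Implicit Defensive.
Import Order.TTheory GRing.Theory Num.Theory.
Local Open Scope classical_set_scope.
Local Open Scope ring_scope.

Definition supnorm (K : Type) (R : realType) (f : K -> R) : R :=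
  sup [set `|f x| | x in [set: K]].

Definition CKp_ball (K : topologicalType) (R : realType) (p : K) : set (K -> R) :=
  [set f | continuous f /\ f p = 0 /\ supnorm f <= 1].

Definition CKp_BFPP (K : topologicalType) (R : realType) (p : K) : Prop :=
  forall T : (K -> R) -> (K -> R),
    (forall f, @CKp_ball K R p f -> @CKp_ball K R p (T f)) ->
    (forall f g, @CKp_ball K R p f -> @CKp_ball K R p g ->
       supnorm (T f - T g) <= supnorm (f - g)) ->
    exists2 f, @CKp_ball K R p f & T f = f.

(* Main.v *)
Require Import Defs.
From HB Require Import structures.
From mathcomp Require Import all_boot all_order all_algebra.
From mathcomp Require Import all_classical all_reals all_analysis.
From mathcomp Require Import lra.
Set Implicit Arguments. Unset Strict Implicit. Unset Printing Implicit Defensive.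
Import Order.TTheory GRing.Theory Num.Theory.
Import numFieldNormedType.Exports.
Local Open Scope classical_set_scope.
Local Open Scope ring_scope.

Lemma cont_bnd (R : realType) (K : topologicalType) (f : K -> R) :
  continuous f -> compact [set: K] -> exists M, forall x, `|f x| <= M.
Proof.
move=> cf cK.
have : compact (f @` [set: K]).
  apply: continuous_compact => //; exact: continuous_subspaceT.
move=> /(@compact_bounded R R^o) [M [_ HM]].
exists (M + 1) => x; apply: (HM (M+1)); first by rewrite ltrDl.
by exists x.
Qed.

Lemma supnorm_ge (R : realType) (K : topologicalType) (f : K -> R) x :
  continuous f -> compact [set: K] -> `|f x| <= supnorm f.
Proof.
move=> cf cK; have [M HM] := cont_bnd cf cK.
apply: ub_le_sup; last by exists x.
by exists M => _ [y _ <-].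
Qed.

Lemma supnorm_le (R : realType) (K : topologicalType) (f : K -> R) (c : R) (x0 : K) :
  (forall x, `|f x| <= c) -> supnorm f <= c.
Proof.
move=> H; apply: ge_sup; first by exists `|f x0|, x0.
by move=> _ [y _ <-].
Qed.


Lemma minlip (R : realDomainType) (c a b : R) :
  `|Num.min c a - Num.min c b| <= `|a - b|.
Proof.
have h1 := ler_norm (a - b); have h2 : - (a - b) <= `|a - b|.
  by rewrite -normrN ler_norm.
have [ha|ha] := leP c a; have [hb|hb] := leP c b;
  rewrite ?(min_l ha) ?(min_r (ltW ha)) ?(min_l hb) ?(min_r (ltW hb));
  rewrite ler_norml; apply/andP; split; lra.
Qed.

Lemma part2 (R : realType) (K : topologicalType) (u : K -> R) (p : K) :
  compact [set: K] -> continuous u -> (forall x, 0 <= u x) -> u p = 0 ->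
  ~ (\forall x \near p, u x = 0) -> ~ @CKp_BFPP K R p.
Proof.
move=> cK cu u0 up nu H.
pose T := fun f : K -> R => fun x => Num.min 1 (f x + u x).
have cT : forall f, continuous f -> continuous (T f).
  move=> f cf x; apply: (@continuous_min R K (fun=> 1) (fun x => f x + u x)).
    exact: cvg_cst.
  by apply: cvgD; [exact: cf|exact: cu].
have Tb : forall f, CKp_ball p f -> CKp_ball p (T f).
  move=> f [cf [fp nf]]; split; first exact: cT.
  split; first by rewrite /T fp up addr0 /= min_r // ler01.
  apply: (supnorm_le p) => x; rewrite /T.
  have := le_trans (supnorm_ge x cf cK) nf; rewrite ler_norml => /andP[f1 f2].
  rewrite ler_norml le_min ge_min lexx /= andbT (_ : -1 <= 1 = true) /=; last by apply/(le_trans (lerN10 _) ler01).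
  by rewrite (le_trans f1) // lerDl.
have Tne : forall f g, CKp_ball p f -> CKp_ball p g -> supnorm (T f - T g) <= supnorm (f - g).
  move=> f g [cf _] [cg _].
  apply: (supnorm_le p) => x; rewrite /T /=.
  apply: le_trans (supnorm_ge x _ cK); last by move=> y; apply: cvgB; [exact: cf| exact: cg].
  have := minlip 1 (f x + u x) (g x + u x).
  by rewrite /= opprD addrACA subrr addr0.
have [f [cf [fp nf]] Tf] := H T Tb Tne.
apply: nu.
have : f @ p --> f p := cf p.
rewrite fp => /cvgrPdist_lt /(_ (1/2)) H2.
apply: filterS (H2 _) => //= t; rewrite sub0r normrN => ht.
have Tft : Num.min 1 (f t + u t) = f t by rewrite -[in RHS]Tf.
apply/eqP; rewrite eq_le u0 andbT; apply: contraTT isT; rewrite -ltNge => ut.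
have ft1 : f t < 1 by apply: le_lt_trans (ler_norm _) _; apply: (lt_trans ht); lra.
have : f t < Num.min 1 (f t + u t) by rewrite lt_min ft1 /= ltrDl.
by rewrite Tft ltxx.
Qed.


Lemma two_points (T : Type) (S : set T) : infinite_set S ->
  exists x y, S x /\ S y /\ x <> y.
Proof.
move=> iS; have [x Sx] := infinite_setN0 iS.
have : infinite_set (S `\` [set x]).
  move=> fD; apply: iS; apply: (@sub_finite_set _ _ ((S `\` [set x]) `|` [set x])).
    by move=> z Sz; have [->|nz] := pselect (z = x); [right|left].
  by rewrite finite_setU; split => //; exact: finite_set1.
move=> /infinite_setN0 [y [Sy nyx]]; exists x, y; split => //; split => // e.
by apply: nyx; rewrite e.
Qed.

Lemma split_clopen (K : topologicalType) :
  (forall x y : K, x <> y -> exists C, clopen C /\ C x /\ ~ C y) ->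
  forall S : set K, clopen S -> infinite_set S ->
  exists C, clopen C /\ C !=set0 /\ C `<=` S /\ clopen (S `\` C) /\ infinite_set (S `\` C).
Proof.
move=> sep S cS iS; have [x [y [Sx [Sy nxy]]]] := two_points iS.
have [G [cG [Gx nGy]]] := sep _ _ nxy.
have cSG : clopen (S `&` G) by exact: clopenI.
have cSnG : clopen (S `&` ~` G) by apply: clopenI => //; exact: clopenC.
have [fin|inf] := pselect (finite_set (S `\` (S `&` G))).
  exists (S `\` (S `&` G)); split; first by rewrite setDE; apply: clopenI => //; exact: clopenC.
  split; first by exists y; split => // -[].
  split; first by move=> z [].
  have -> : S `\` (S `\` (S `&` G)) = S `&` G.
    apply/seteqP; split => z /=; first by move=> [Sz nD]; split => //; apply: contrapT => nGz; apply: nD; split => // -[].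
    by move=> [Sz Gz]; split => // -[_]; apply.
  split => // fSG; apply: iS; apply: (@sub_finite_set _ _ ((S `&` G) `|` (S `\` (S `&` G)))).
    by move=> z Sz; have [Gz|nGz] := pselect (G z); [left|right; split => // -[]].
  by rewrite finite_setU.
exists (S `&` G); split => //; split; first by exists x.
split; first by move=> z [].
by split => //; rewrite setDE; apply: clopenI => //; exact: clopenC.
Qed.

Lemma disj_seq (K : topologicalType) :
  (forall x y : K, x <> y -> exists C, clopen C /\ C x /\ ~ C y) ->
  infinite_set [set: K] ->
  exists C : nat -> set K, (forall n, clopen (C n) /\ C n !=set0) /\
    (forall n m x, C n x -> C m x -> n = m).
Proof.
move=> sep iK.
pose P (S : set K) := fun C : set K =>
  clopen C /\ C !=set0 /\ C `<=` S /\ clopen (S `\` C) /\ infinite_set (S `\` C).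
pose piece S := xget set0 (P S).
pose St n := iter n (fun S => S `\` piece S) setT.
have inv : forall n, clopen (St n) /\ infinite_set (St n).
  elim=> [|n [cS iS]]; first by split => //; exact: clopenT.
  have := xgetPex set0 (split_clopen sep cS iS).
  by move=> [_ [_ [_ h]]].
have Pn : forall n, P (St n) (piece (St n)).
  by move=> n; have [cS iS] := inv n; have := xgetPex set0 (split_clopen sep cS iS).
have mono : forall n k, St (n + k)%N `<=` St n.
  move=> n; elim=> [|k IH]; first by rewrite addn0.
  by rewrite addnS /= => z [/IH].
exists (fun n => piece (St n)); split.
  by move=> n; have [? [? _]] := Pn n.
have key : forall n k x, piece (St n) x -> ~ piece (St (n + k.+1)%N) x.
  move=> n k x h1 h2; have [_ [_ [sub _]]] := Pn (n + k.+1)%N.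
  have := mono n.+1 k x; rewrite addSn addnS in sub h2 *.
  by move=> /(_ (sub _ h2)) [].
move=> n m x h1 h2; have [nm|mn|//] := ltngtP n m.
  by exfalso; apply: (key n (m - n.+1)%N x h1); rewrite subnSK // subnKC // ltnW.
by exfalso; apply: (key m (n - m.+1)%N x h2); rewrite subnSK // subnKC // ltnW.
Qed.


Lemma part1 (R : realType) (K : topologicalType) :
  hausdorff_space K -> compact [set: K] -> infinite_set [set: K] ->
  exists (u : K -> R) (p : K), continuous u /\ (forall x, 0 <= u x) /\
    u p = 0 /\ ~ (\forall x \near p, u x = 0).
Proof.
move=> hK cK iK.
apply: contrapT => N0.
have N : forall (u : K -> R) p, continuous u -> (forall x, 0 <= u x) -> u p = 0 ->
    \forall x \near p, u x = 0.
  move=> u p cu u0 up; apply: contrapT => h; apply: N0; exists u, p; by split.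
have zc : forall u : K -> R, continuous u -> (forall x, 0 <= u x) ->
    clopen [set x | u x = 0].
  move=> u cu u0; split.
    by rewrite openE => x /= ux; exact: N.
  apply: (@preimage_closed _ _ u [set 0 : R]); first by move=> x _; exact: cu.
  exact: closed_eq.
have sep : forall x y : K, x <> y -> exists C, clopen C /\ C x /\ ~ C y.
  move=> x y nxy.
  have nK := compact_normal hK cK.
  have ac := hausdorff_accessible hK.
  have us : uniform_separator [set x] [set y].
    apply: (proj1 (@normal_separatorP R K) nK); try exact: accessible_closed_set1.
    by apply/seteqP; split => z // [/= -> e]; exact: nxy.
  pose f := @Urysohn K R [set x] [set y].
  have f0 : forall z, 0 <= f z.
    move=> z; have : `[0, 1]%classic (f z) by apply: Urysohn_range; exists z.
    by rewrite /= in_itv /= => /andP[].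
  exists [set z | f z = 0]; split; first by apply: zc => //; exact: Urysohn_continuous.
  split; first by apply: (Urysohn_sub0 us); exists x.
  move=> /= fy; have : f y = 1 by apply: (Urysohn_sub1 us); exists y.
  by rewrite fy => /eqP; rewrite eq_sym oner_eq0.
have [C [cC dC]] := disj_seq sep iK.
pose v (n : nat) : R := (n.+1%:R)^-1.
have vgt0 : forall n, 0 < v n by move=> n; rewrite /v invr_gt0 ltr0Sn.
have vle : forall n m, (n <= m)%N -> v m <= v n.
  by move=> n m nm; rewrite /v lef_pV2 ?posrE ?ltr0Sn // ler_nat ltnS.
pose u (x : K) : R := if pselect (exists n, C n x) then v (xget 0%N (fun n => C n x)) else 0.
have uC : forall n x, C n x -> u x = v n.
  move=> n x Cx; rewrite /u; case: pselect => [h|h]; last by exfalso; apply: h; exists n.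
  by congr v; apply: (dC _ _ x) => //; exact: (xgetPex 0%N h).
have uN : forall x, (forall n, ~ C n x) -> u x = 0.
  move=> x h; rewrite /u; case: pselect => [[n Cn]|//]; by exfalso; exact: h n Cn.
have u0 : forall x, 0 <= u x.
  move=> x; have [[n Cx]|h] := pselect (exists n, C n x); first by rewrite (uC n x Cx) ltW.
  by rewrite uN // => n Cx; apply: h; exists n.
have cu : continuous u.
  move=> x; have [[n Cx]|h] := pselect (exists n, C n x).
    apply: (@near_cst_continuous _ _ (v n)).
    have : nbhs x (C n) by apply: open_nbhs_nbhs; split => //; have [[]] := cC n.
    by apply: filterS => y /uC.
  have ux : u x = 0 by apply: uN => n Cx; apply: h; exists n.
  apply/cvgrPdist_lt => e e0; rewrite ux.
  have nearN : forall M, \forall y \near x, forall k, (k < M)%N -> ~ C k y.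
    elim=> [|M IH]; first by apply: nearW => y k.
    have ncN : nbhs x (~` C M).
      apply: open_nbhs_nbhs; split; last by move=> CN; apply: h; exists M.
      by apply: closed_openC; have [[]] := cC M.
    apply: (filterS2 _ _ IH ncN) => y h1 h2 k.
    rewrite ltnS leq_eqVlt => /orP[/eqP->//|]; exact: h1.
  set M := Num.truncn (e^-1).
  have vN : v M < e.
    rewrite /v -[e]invrK ltf_pV2 ?posrE ?invr_gt0 ?ltr0Sn //; exact: archimedean.Num.Theory.truncnS_gt.
  apply: filterS (nearN M) => y hy; rewrite sub0r normrN.
  have [[n Cn]|h'] := pselect (exists n, C n y); last first.
    by rewrite uN ?normr0 // => n Cn; apply: h'; exists n.
  rewrite (uC n y Cn) gtr0_norm //; apply: le_lt_trans vN; apply: vle.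
  by rewrite leqNgt; apply/negP => nN; exact: hy n nN Cn.
have [oZ _] := zc u cu u0.
have nc := proj1 (compact_near_coveringP [set: K]) cK.
have cov : forall x, [set: K] x -> \forall x' \near x & i \near (\oo : set_system nat),
    u x' = 0 \/ exists k, (k < i)%N /\ C k x'.
  move=> x _; have [[k Ck]|h] := pselect (exists n, C n x).
    have nCk : nbhs x (C k) by apply: open_nbhs_nbhs; split => //; have [[]] := cC k.
    exists (C k, [set i | (k < i)%N]); first by split => //; exact: nbhs_infty_gt.
    by move=> [y i] [/= Cy ki]; right; exists k.
  have nZ : nbhs x [set y | u y = 0].
    by apply: open_nbhs_nbhs; split => //=; apply: uN => n Cn; apply: h; exists n.
  exists ([set y | u y = 0], [set: nat]); first by split => //; exact: filterT.
  by move=> [y i] [/= Zy _]; left.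
have [M _ HM] := nc _ _ _ _ cov.
have [y Cy] := (cC M).2.
have [uy|[k [kM Ck]]] := HM M (leqnn M) y I.
  by move: uy; rewrite (uC M y Cy) => /eqP; rewrite gt_eqF.
by have := dC _ _ _ Ck Cy => e; rewrite e ltnn in kM.
Qed.

Unset Implicit Arguments.
Local Close Scope ring_scope.

Theorem mainTheorem17 (R : realType) (K : topologicalType) :
  hausdorff_space K -> compact [set: K] -> infinite_set [set: K] ->
  exists p : K, ~ @CKp_BFPP K R p.
Proof.
move=> hK cK iK.
have [u [p [cu [u0 [up nu]]]]] := @part1 R K hK cK iK.
exists p; exact: (part2 cK cu u0 up nu).
Qed.
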